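(* Let $S$ be a monoid such that the word $xt_1xyt_2y$ (distinct variables $x,y,t_1,t_2$) is an isoterm for $S$. Then for every $n\ge1$ the word $$(z_1\,t\,p_1\,t\,z_2\,t\,p_2\,t\cdots z_n\,t\,p_n\,t)(z_1q_1z_2q_2\cdots z_nq_n)(p_1r_1p_2r_2\cdots p_nr_n)(t\,q_1\,t\,r_1\,t\,q_2\,t\,r_2\cdots t\,q_n\,t\,r_n)$$ is an isoterm for $S$, where $z_i,p_i,q_i,r_i$ are distinct variables and each displayed occurrence of the letter $t$ denotes a different linear variable (distinct from each other and from all $z_i,p_i,q_i,r_i$).
   Context: Words are elements of the free semigroup over a countably infinite alphabet of variables. A monoid $S$ satisfies an identity $\mathbf u\approx\mathbf v$ if both sides are equal under every evaluation of the variables in $S$. A word $\mathbf w$ is an isoterm for $S$ if $S$ satisfies no identity $\mathbf w\approx\mathbf w'$ with $\mathbf w'\ne\mathbf w$. A variable is linear in a word if it occurs in it exactly once. *)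

(* Defs.v *)
From mathcomp Require Import all_boot.
Set Implicit Arguments. Unset Strict Implicit. Unset Printing Implicit Defensive.

Definition word := seq nat.

Record monoid := Monoid {
  carrier :> Type;
  mmul : carrier -> carrier -> carrier;
  mone : carrier;
  mmulA : forall a b c, mmul a (mmul b c) = mmul (mmul a b) c;
  mmul1 : forall a, mmul mone a = a;
  mmulr1 : forall a, mmul a mone = a }.

Definition weval (S : monoid) (phi : nat -> S) (w : word) : S :=
  foldr (fun a acc => mmul (phi a) acc) (mone S) w.

Definition satisfies (S : monoid) (u v : word) : Prop :=
  forall phi : nat -> S, weval phi u = weval phi v.

Definition isoterm (S : monoid) (w : word) : Prop :=
  w != [::] /\
  forall w' : word, w' != [::] -> satisfies S w w' -> w' = w.

(* x t1 x y t2 y with x = 0, t1 = 1, y = 2, t2 = 3 *)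
Definition w_xtxyty : word := [:: 0; 1; 0; 2; 3; 2].

(* Encoding of the variables of the big word, for block index i (0-based):
   z_i = 8i, p_i = 8i+1, q_i = 8i+2, r_i = 8i+3, and the four linear
   t-variables belonging to block i are 8i+4, 8i+5, 8i+6, 8i+7. *)
Definition zv i := 8 * i.
Definition pv i := 8 * i + 1.
Definition qv i := 8 * i + 2.
Definition rv i := 8 * i + 3.
Definition tv i k := 8 * i + 4 + k.

Definition big_word (n : nat) : word :=
  flatten [seq [:: zv i; tv i 0; pv i; tv i 1] | i <- iota 0 n] ++
  flatten [seq [:: zv i; qv i] | i <- iota 0 n] ++
  flatten [seq [:: pv i; rv i] | i <- iota 0 n] ++
  flatten [seq [:: tv i 2; qv i; tv i 3; rv i] | i <- iota 0 n].

(* Main.v *)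
Require Import Defs.
From mathcomp Require Import all_boot.
From mathcomp Require Import zify.
Set Implicit Arguments. Unset Strict Implicit. Unset Printing Implicit Defensive.

Section Sat.
Variable S : monoid.

Lemma weval_cat (phi : nat -> S) u v :
  weval phi (u ++ v) = mmul (weval phi u) (weval phi v).
Proof. elim: u => [|a u IH] /=; first by rewrite mmul1. by rewrite IH mmulA. Qed.

Lemma sat_cat3 p q u v : satisfies S u v -> satisfies S (p ++ u ++ q) (p ++ v ++ q).
Proof. by move=> H phi; rewrite !weval_cat H. Qed.

Lemma sat_sym u v : satisfies S u v -> satisfies S v u.
Proof. by move=> H phi; rewrite H. Qed.

Lemma sat_filter (P : pred nat) u v :
  satisfies S u v -> satisfies S (filter P u) (filter P v).
Proof.
move=> H phi.
have E w : weval (fun x => if P x then phi x else mone S) w = weval phi (filter P w).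
  elim: w => [|a w IH] //=; case: (P a) => /=; by rewrite IH ?mmul1.
by rewrite -!E H.
Qed.

Lemma sat_map (g : nat -> nat) u v :
  satisfies S u v -> satisfies S (map g u) (map g v).
Proof.
move=> H phi; have E w : weval phi (map g w) = weval (phi \o g) w.
  by elim: w => [|a w IH] //=; rewrite IH.
by rewrite !E H.
Qed.

Lemma cat_ne0 (p q : seq nat) : p != [::] -> p ++ q != [::].
Proof. by case: p. Qed.
Lemma cat_ne (p q r : seq nat) : q != [::] -> p ++ q ++ r != [::].
Proof. by case: p => //; case: q. Qed.

Lemma iso_fac u0 pre fac suf w : isoterm S u0 -> u0 = pre ++ fac ++ suf ->
  fac != [::] -> satisfies S fac w -> w = fac.
Proof.
move=> [_ Hi] Hu Hf Hs.
have Hf' : 0 < size fac by rewrite lt0n size_eq0.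
have [w0|wn] := eqVneq w [::].
  exfalso.
  have H1 : satisfies S u0 (pre ++ fac ++ fac ++ suf).
    move=> phi; rewrite Hu !weval_cat.
    have -> : weval phi fac = mone S by rewrite Hs w0.
    by rewrite !mmul1.
  have Hne : pre ++ fac ++ fac ++ suf != [::].
    by apply: cat_ne.
  have := congr1 size (Hi _ Hne H1); rewrite Hu !size_cat.
  lia.
have Hne : pre ++ w ++ suf != [::] by apply: cat_ne.
have := Hi _ Hne; rewrite Hu => /(_ (sat_cat3 pre suf Hs)).
move=> E; have Hs1 : size (pre ++ w ++ suf) = size (pre ++ fac ++ suf) by rewrite E.
move/eqP: E; rewrite eqseq_cat // eqxx /=; move/eqP.
move: Hs1; rewrite !size_cat => Hs1 E; move/eqP: E; rewrite eqseq_cat; last by move/addnI/addIn: Hs1 => ->.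
by case/andP => /eqP.
Qed.
End Sat.

Definition inL (L : seq nat) : pred nat := fun x => x \in L.
Definition rn (L K : seq nat) (v : nat) := nth 0 K (index v L).

Lemma rn_inj L K : uniq K -> size L = size K -> {in L &, injective (rn L K)}.
Proof.
move=> UK HS x y xL yL; rewrite /rn => /eqP; rewrite nth_uniq -?HS ?index_mem //.
by move/eqP => E; rewrite -(nth_index 0 xL) E nth_index.
Qed.

Lemma map_inj_all (g : nat -> nat) (L : seq nat) s1 s2 : {in L &, injective g} ->
  all (inL L) s1 -> all (inL L) s2 -> map g s1 = map g s2 -> s1 = s2.
Proof.
move=> Hg; elim: s1 s2 => [|a s1 IH] [|b s2] //= /andP[Ha H1] /andP[Hb H2] [E1 E2].
by rewrite (Hg _ _ Ha Hb E1) (IH _ H1 H2 E2).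
Qed.

Lemma direct (S : monoid) (u w : word) L K pre fac suf : isoterm S w_xtxyty ->
  satisfies S u w -> uniq K -> size L = size K ->
  w_xtxyty = pre ++ fac ++ suf -> fac != [::] ->
  map (rn L K) (filter (inL L) u) = fac -> filter (inL L) w = filter (inL L) u.
Proof.
move=> Hi Hs UK HS Hu Hf Hm.
have H1 := sat_map (rn L K) (sat_filter (inL L) Hs).
rewrite Hm in H1.
have := iso_fac Hi Hu Hf H1; rewrite -Hm => E.
by apply: (map_inj_all (rn_inj UK HS)) E; apply: filter_all.
Qed.

Fixpoint occa (c : nat -> nat) (w : seq nat) : seq (nat * nat) :=
  if w is a :: w' then (a, c a) :: occa (fun b => if b == a then (c b).+1 else c b) w'
  else [::].
Definition occ w := occa (fun _ => 0) w.

Lemma occa_mem c w a k : (a, k) \in occa c w -> c a <= k.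
Proof.
elim: w c => [|x w IH] c //=; rewrite inE => /orP[/eqP [-> ->] //|/IH].
by case: eqP => // ->; apply: ltnW.
Qed.

Lemma occa_uniq c w : uniq (occa c w).
Proof.
elim: w c => [|x w IH] c //=; rewrite IH andbT; apply/negP => /occa_mem.
by rewrite eqxx ltnn.
Qed.

Lemma occa_fst c w : map fst (occa c w) = w.
Proof. by elim: w c => [|x w IH] c //=; rewrite IH. Qed.

Lemma occa_filter (P : pred nat) c c' w : (forall b, P b -> c b = c' b) ->
  occa c (filter P w) = filter (fun p => P p.1) (occa c' w).
Proof.
elim: w c c' => [|a w IH] c c' Hc //=; case Pa: (P a) => /=.
  rewrite Hc //; congr cons; apply: IH => b Pb; rewrite Hc //.
apply: IH => b Pb; case: eqP => [E|_]; last by apply: Hc.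
by rewrite E Pa in Pb.
Qed.

Lemma occ_filter (P : pred nat) (w : word) : occ (filter P w) = filter (fun p => P p.1) (occ w).
Proof. by apply: occa_filter. Qed.

Lemma occ_uniq w : uniq (occ w). Proof. exact: occa_uniq. Qed.
Lemma occ_fst w : map fst (occ w) = w. Proof. exact: occa_fst. Qed.

Definition prec w x y := subseq [:: x; y] (occ w).

Lemma prec_filter (P : pred nat) (w : word) (x y : nat * nat) : P x.1 -> P y.1 -> prec (filter P w) x y = prec w x y.
Proof. by move=> Px Py; rewrite /prec occ_filter subseq_filter /= Px Py. Qed.

Lemma prec_mem (w : word) (x y : nat * nat) : prec w x y -> (x \in occ w) && (y \in occ w).
Proof.
move=> H; have := mem_subseq H; move=> Hs.
by rewrite (Hs x) ?(Hs y) // !inE eqxx ?orbT.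
Qed.

Lemma drop_index (T : eqType) (t : seq T) k y : uniq t -> k <= size t ->
  y \in drop k t -> k <= index y t.
Proof.
move=> Ut Hk Hy.
have Ht : t = take k t ++ drop k t by rewrite cat_take_drop.
have Hn : y \notin take k t.
  apply/negP => Hy'; move: Ut; rewrite {1}Ht cat_uniq => /and3P[_ /hasPn H _].
  by move: (H _ Hy); rewrite Hy'.
rewrite {1}Ht index_cat (negPf Hn) size_take.
case: ltnP => [_|Hkt]; first exact: leq_addr.
exact: leq_trans Hk (leq_addr _ _).
Qed.

Lemma prec_lt (w : word) x y : prec w x y -> index x (occ w) < index y (occ w).
Proof.
move=> H; have Ut := occ_uniq w.
have /andP[xo yo] := prec_mem H.
have Uxy : uniq [:: x; y] := subseq_uniq H Ut.
have nxy : x != y by move: Uxy; rewrite /= inE andbT.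
have : mem2 (occ w) x y by rewrite mem2E (negPf nxy).
rewrite /mem2 => /(drop_index Ut (index_size _ _)); rewrite leq_eqVlt.
case/orP => // /eqP E; exfalso; move/negP: nxy; apply.
by rewrite -(nth_index x xo) E nth_index.
Qed.

Lemma mem2_index (T : eqType) (t : seq T) x y : y \in t -> index x t <= index y t ->
  mem2 t x y.
Proof.
move=> yt H; rewrite /mem2.
have -> : y = nth y (drop (index x t) t) (index y t - index x t).
  by rewrite nth_drop subnKC // nth_index.
have Hy : index y t < size t by rewrite index_mem.
by apply: mem_nth; rewrite size_drop; lia.
Qed.

Lemma prec_total (w : word) x y : x \in occ w -> y \in occ w -> x != y ->
  prec w x y || prec w y x.
Proof.
move=> xo yo nxy; rewrite /prec.
case: (leqP (index x (occ w)) (index y (occ w))) => H.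
  by have := mem2E (occ w) x y; rewrite (negPf nxy) => <-; rewrite mem2_index.
have := mem2E (occ w) y x; rewrite eq_sym (negPf nxy) => <-.
by rewrite mem2_index ?orbT // ltnW.
Qed.

Lemma sorted_index_aux (T : eqType) (p s : seq T) : uniq (p ++ s) ->
  sorted (fun x y => index x (p ++ s) < index y (p ++ s)) s.
Proof.
elim: s p => [|x s IH] p //= U.
case: s IH U => [|y s] IH U //=.
have U' : uniq (rcons p x ++ y :: s) by rewrite cat_rcons.
have := IH (rcons p x) U'; rewrite cat_rcons => /= ->; rewrite andbT.
move: U; rewrite cat_uniq /= => /and3P[_ Hp /and3P[Hx Hy _]].
rewrite !index_cat.
have -> : (x \in p) = false by apply/negbTE; apply: contra Hp => ->.
have -> : (y \in p) = false by apply/negbTE; apply: contra Hp => ->; rewrite orbT.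
rewrite /= eqxx; case: eqP => [E|_]; last by lia.
by move: Hx; rewrite E inE eqxx.
Qed.

Lemma sorted_index (T : eqType) (t : seq T) : uniq t ->
  sorted (fun x y => index x t < index y t) t.
Proof. exact: (@sorted_index_aux T [::]). Qed.

Lemma sorted_mem (T : eqType) (R : rel T) s (t : seq T) : sorted R s -> 1 < size s ->
  (forall x y, R x y -> (x \in t) && (y \in t)) -> {subset s <= t}.
Proof.
move=> + + HR; elim: s => [|x s IH] //=.
case: s IH => [|y s] IH //= /andP[Rxy Hp] _ z.
rewrite inE => /orP[/eqP ->|]; first by case/andP: (HR _ _ Rxy).
case: s IH Hp => [|u s] IH Hp.
  by rewrite inE => /eqP ->; case/andP: (HR _ _ Rxy).
by apply: IH.
Qed.

Lemma chainE (w v : word) (E : seq (nat * nat)) : map fst E = v ->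
  sorted (prec w) E -> 1 < size E -> size w = size v -> w = v.
Proof.
move=> HE Hs H2 Hsz.
pose t := occ w; have Ut : uniq t := occ_uniq w.
pose leT := fun x y => index x t < index y t.
have HsE : sorted leT E := sub_sorted (@prec_lt w) Hs.
have Hsub : {subset E <= t} := sorted_mem Hs H2 (@prec_mem w).
have tr : transitive leT by move=> a b c; apply: ltn_trans.
have irr : irreflexive leT by move=> a; apply: ltnn.
have UE : uniq E := sorted_uniq tr irr HsE.
have Hst : size t <= size E.
  have -> : size E = size v by rewrite -HE size_map.
  by rewrite -Hsz -{1}(occ_fst w) size_map.
have [_ Heq] := uniq_min_size UE Hsub Hst.
have := irr_sorted_eq tr irr HsE (sorted_index Ut) Heq.
by move=> Et; rewrite -HE Et occ_fst.
Qed.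


Definition lt8 a c := 8 * a + c.
Lemma zvE i : zv i = lt8 i 0. Proof. by rewrite /zv /lt8 addn0. Qed.
Lemma pvE i : pv i = lt8 i 1. Proof. by []. Qed.
Lemma qvE i : qv i = lt8 i 2. Proof. by []. Qed.
Lemma rvE i : rv i = lt8 i 3. Proof. by []. Qed.
Lemma tvE0 i : tv i 0 = lt8 i 4. Proof. by rewrite /tv /lt8 addn0. Qed.
Lemma tvE1 i : tv i 1 = lt8 i 5. Proof. by rewrite /tv /lt8 -addnA. Qed.
Lemma tvE2 i : tv i 2 = lt8 i 6. Proof. by rewrite /tv /lt8 -addnA. Qed.
Lemma tvE3 i : tv i 3 = lt8 i 7. Proof. by rewrite /tv /lt8 -addnA. Qed.
Lemma lt8_eq a b c d : c < 8 -> d < 8 -> (lt8 a c == lt8 b d) = (a == b) && (c == d).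
Proof.
rewrite /lt8 => Hc Hd; apply/idP/idP => [/eqP H|/andP[/eqP -> /eqP ->]] //.
by apply/andP; split; apply/eqP; lia.
Qed.

Definition blkA j := [:: zv j; tv j 0; pv j; tv j 1].
Definition blkB j := [:: zv j; qv j].
Definition blkC j := [:: pv j; rv j].
Definition blkD j := [:: tv j 2; qv j; tv j 3; rv j].

Lemma big_wordE n : big_word n = flatten [seq blkA j | j <- iota 0 n] ++
  flatten [seq blkB j | j <- iota 0 n] ++ flatten [seq blkC j | j <- iota 0 n] ++
  flatten [seq blkD j | j <- iota 0 n].
Proof. by []. Qed.

Lemma filter_flat (P : pred nat) (f : nat -> seq nat) s :
  filter P (flatten [seq f j | j <- s]) = flatten [seq filter P (f j) | j <- s].
Proof. by elim: s => //= a s IH; rewrite filter_cat IH. Qed.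

Lemma flat_pts (g : nat -> seq nat) n js : sorted ltn js -> all (fun j => j < n) js ->
  (forall j, j < n -> j \notin js -> g j = [::]) ->
  flatten [seq g j | j <- iota 0 n] = flatten [seq g j | j <- js].
Proof.
move=> Hs Ha Hg.
have E1 : forall s, (forall j, j \in s -> j < n) ->
    flatten [seq g j | j <- s] = flatten [seq g j | j <- filter (fun j => j \in js) s].
  elim=> [|a s IH] //= Hs'; rewrite IH => [|j Hj]; last by apply: Hs'; rewrite inE Hj orbT.
  case: ifP => //= Ha'; rewrite Hg //; last by rewrite Ha'.
  by apply: Hs'; rewrite inE eqxx.
rewrite E1 => [|j]; last by rewrite mem_iota.
congr flatten; congr map.
apply: (irr_sorted_eq ltn_trans ltnn) => //.
  by apply: sorted_filter; [exact: ltn_trans | exact: iota_ltn_sorted].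
move=> j; rewrite mem_filter mem_iota /=; apply/andP/idP => [[]//|Hj]; split=> //.
by move/allP: Ha => /(_ _ Hj).
Qed.


Lemma filterV (P : pred nat) n (jA jB jC jD : seq nat) :
  sorted ltn jA -> all (fun j => j < n) jA -> (forall j, j < n -> j \notin jA -> filter P (blkA j) = [::]) ->
  sorted ltn jB -> all (fun j => j < n) jB -> (forall j, j < n -> j \notin jB -> filter P (blkB j) = [::]) ->
  sorted ltn jC -> all (fun j => j < n) jC -> (forall j, j < n -> j \notin jC -> filter P (blkC j) = [::]) ->
  sorted ltn jD -> all (fun j => j < n) jD -> (forall j, j < n -> j \notin jD -> filter P (blkD j) = [::]) ->
  filter P (big_word n) = flatten [seq filter P (blkA j) | j <- jA] ++
    flatten [seq filter P (blkB j) | j <- jB] ++ flatten [seq filter P (blkC j) | j <- jC] ++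
    flatten [seq filter P (blkD j) | j <- jD].
Proof.
move=> sA aA hA sB aB hB sC aC hC sD aD hD.
rewrite big_wordE !filter_cat !filter_flat.
by rewrite (flat_pts sA aA hA) (flat_pts sB aB hB) (flat_pts sC aC hC) (flat_pts sD aD hD).
Qed.

Ltac normL := rewrite ?zvE ?pvE ?qvE ?rvE ?tvE0 ?tvE1 ?tvE2 ?tvE3 ?lt8_eq //=.

Ltac dec := repeat (match goal with
  | |- context [?x == ?y] => let H := fresh "H" in
      case: (@eqP _ x y) => H; try (exfalso; move: H; rewrite ?/lt8; lia);
      try subst x; try subst y
  end; rewrite ?andbF ?andbT ?orbF ?orbT /=).

Ltac side := first [ by rewrite /= ?andbT; repeat (apply/andP; split); lia
  | move=> j Hj; rewrite ?inE; rewrite /blkA /blkB /blkC /blkD /inL /=; rewrite ?inE; normL; dec; done ].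

Ltac compV jA jB jC jD :=
  rewrite (@filterV _ _ jA jB jC jD); try side;
  rewrite /blkA /blkB /blkC /blkD /inL /= ?inE; normL; dec; try done.


Lemma fD1 n i : i < n -> filter (inL [:: zv i; tv i 0]) (big_word n) = [:: zv i; tv i 0; zv i].
Proof. move=> Hi; compV [:: i] [:: i] (@nil nat) (@nil nat). Qed.
Lemma fD2 n i : i < n -> filter (inL [:: tv i 0; pv i; tv i 1]) (big_word n) = [:: tv i 0; pv i; tv i 1; pv i].
Proof. move=> Hi; compV [:: i] (@nil nat) [:: i] (@nil nat). Qed.
Lemma fD3 n i : i < n -> filter (inL [:: pv i; tv i 1]) (big_word n) = [:: pv i; tv i 1; pv i].
Proof. move=> Hi; compV [:: i] (@nil nat) [:: i] (@nil nat). Qed.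
Lemma fD4 n i : i.+1 < n -> filter (inL [:: tv i 1; zv i.+1; tv i.+1 0]) (big_word n) = [:: tv i 1; zv i.+1; tv i.+1 0; zv i.+1].
Proof. move=> Hi; compV [:: i; i.+1] [:: i.+1] (@nil nat) (@nil nat). Qed.
Lemma fD5 n : 1 < n -> filter (inL [:: zv 0; tv n.-1 1]) (big_word n) = [:: zv 0; tv n.-1 1; zv 0].
Proof. move=> Hi; compV [:: 0; n.-1] [:: 0] (@nil nat) (@nil nat). Qed.
Lemma fD6 n i : i < n -> filter (inL [:: zv i; tv i 0; qv i; tv i 2]) (big_word n) = [:: zv i; tv i 0; zv i; qv i; tv i 2; qv i].
Proof. move=> Hi; compV [:: i] [:: i] (@nil nat) [:: i]. Qed.
Lemma fD7 n i : i < n -> filter (inL [:: qv i; tv i 2]) (big_word n) = [:: qv i; tv i 2; qv i].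
Proof. move=> Hi; compV (@nil nat) [:: i] (@nil nat) [:: i]. Qed.
Lemma fD8 n i : i < n -> filter (inL [:: pv i; tv i 1; rv i; tv i 3]) (big_word n) = [:: pv i; tv i 1; pv i; rv i; tv i 3; rv i].
Proof. move=> Hi; compV [:: i] (@nil nat) [:: i] [:: i]. Qed.
Lemma fD9 n i : i < n -> filter (inL [:: rv i; tv i 3]) (big_word n) = [:: rv i; tv i 3; rv i].
Proof. move=> Hi; compV (@nil nat) (@nil nat) [:: i] [:: i]. Qed.
Lemma fD10 n : 1 < n -> filter (inL [:: rv n.-1; tv 0 2]) (big_word n) = [:: rv n.-1; tv 0 2; rv n.-1].
Proof. move=> Hi; compV (@nil nat) (@nil nat) [:: n.-1] [:: 0; n.-1]. Qed.
Lemma fD11 n i : i < n -> filter (inL [:: qv i; tv i 2; tv i 3]) (big_word n) = [:: qv i; tv i 2; qv i; tv i 3].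
Proof. move=> Hi; compV (@nil nat) [:: i] (@nil nat) [:: i]. Qed.
Lemma fD12 n i : i.+1 < n -> filter (inL [:: rv i; tv i 3; tv i.+1 2]) (big_word n) = [:: rv i; tv i 3; rv i; tv i.+1 2].
Proof. move=> Hi; compV (@nil nat) (@nil nat) [:: i] [:: i; i.+1]. Qed.
Lemma fI1 n i : i.+1 < n -> filter (inL [:: zv i.+1; tv i.+1 0; qv i; tv i 2]) (big_word n) = [:: zv i.+1; tv i.+1 0; qv i; zv i.+1; tv i 2; qv i].
Proof. move=> Hi; compV [:: i.+1] [:: i; i.+1] (@nil nat) [:: i]. Qed.
Lemma fI2 n : 0 < n -> filter (inL [:: pv 0; tv 0 1; qv n.-1; tv n.-1 2]) (big_word n) = [:: pv 0; tv 0 1; qv n.-1; pv 0; tv n.-1 2; qv n.-1].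
Proof. move=> Hi; compV [:: 0] [:: n.-1] [:: 0] [:: n.-1]. Qed.
Lemma fI3 n i : i.+1 < n -> filter (inL [:: pv i.+1; tv i.+1 1; rv i; tv i 3]) (big_word n) = [:: pv i.+1; tv i.+1 1; rv i; pv i.+1; tv i 3; rv i].
Proof. move=> Hi; compV [:: i.+1] (@nil nat) [:: i; i.+1] [:: i]. Qed.
Lemma fDc n c : 0 < n -> 8 * n <= c -> filter (inL [:: c; tv 0 0]) (big_word n) = [:: tv 0 0].
Proof. move=> Hi Hc; compV [:: 0] (@nil nat) (@nil nat) (@nil nat). Qed.

Lemma fD5' n : 0 < n -> filter (inL [:: zv 0; tv n.-1 1]) (big_word n) = [:: zv 0; tv n.-1 1; zv 0].
Proof.
move=> Hn; case: (ltnP 1 n) => H; first exact: fD5.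
have -> : n = 1 by lia.
compV [:: 0] [:: 0] (@nil nat) (@nil nat).
Qed.
Lemma fD10' n : 0 < n -> filter (inL [:: rv n.-1; tv 0 2]) (big_word n) = [:: rv n.-1; tv 0 2; rv n.-1].
Proof.
move=> Hn; case: (ltnP 1 n) => H; first exact: fD10.
have -> : n = 1 by lia.
compV (@nil nat) (@nil nat) [:: 0] [:: 0].
Qed.


Ltac neqs := repeat match goal with
 | H : is_true (?x != ?y) |- context [?x == ?y] => rewrite (negbTE H)
 end.
Ltac symneq := repeat match goal with
 | H : is_true (?x != ?y) |- _ =>
   match goal with
   | H' : is_true (y != x) |- _ => fail 1
   | _ => have ? : y != x by rewrite eq_sym
   end
 end.
Ltac pcomp := rewrite /prec /occ /rn /=; do 4 (rewrite ?xpair_eqE; neqs; rewrite ?eqxx /=).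

Section Pat.
Variables (S : monoid) (V W : word).
Hypothesis Hiso : isoterm S w_xtxyty.
Hypothesis Hsat : satisfies S V W.

Definition fixed L := filter (inL L) W = filter (inL L) V.

Lemma fixed_prec L x y : fixed L -> x.1 \in L -> y.1 \in L ->
  prec (filter (inL L) V) x y -> prec W x y.
Proof. by move=> H xL yL; rewrite -H prec_filter. Qed.

Lemma fixed_count L c : fixed L -> c \in L -> count_mem c W = count_mem c V.
Proof.
move=> H cL; have E w : count_mem c (filter (inL L) w) = count_mem c w.
  rewrite count_filter; apply: eq_count => x /=; rewrite /inL.
  by case: eqP => // ->; rewrite cL.
by rewrite -E H E.
Qed.

Lemma P1 a s : a != s -> filter (inL [:: a; s]) V = [:: a; s; a] ->
  [/\ prec W (a,0) (s,0), prec W (s,0) (a,1),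
      count_mem a W = count_mem a V & count_mem s W = count_mem s V].
Proof.
move=> Has Hf.
have Hfx : fixed [:: a; s].
  apply: (direct (K := [:: 0; 1]) (pre := [::]) (fac := [:: 0; 1; 0]) (suf := [:: 2; 3; 2]) Hiso Hsat) => //.
  by rewrite Hf; symneq; pcomp.
symneq.
have aL : a \in [:: a; s] by rewrite !inE eqxx.
have sL : s \in [:: a; s] by rewrite !inE eqxx orbT.
split; [ | | exact: fixed_count Hfx aL | exact: fixed_count Hfx sL].
  apply: (fixed_prec (x := (a,0)) (y := (s,0)) Hfx aL sL); rewrite Hf.
  by pcomp.
apply: (fixed_prec (x := (s,0)) (y := (a,1)) Hfx sL aL); rewrite Hf.
by pcomp.
Qed.

Lemma P2 t a u : t != a -> t != u -> a != u -> filter (inL [:: t; a; u]) V = [:: t; a; u; a] ->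
  prec W (t,0) (a,0).
Proof.
move=> H1 H2 H3 Hf; symneq.
have Hfx : fixed [:: t; a; u].
  apply: (direct (K := [:: 0; 2; 3]) (pre := [:: 0; 1]) (fac := [:: 0; 2; 3; 2]) (suf := [::]) Hiso Hsat) => //.
  by rewrite Hf; pcomp.
apply: (fixed_prec (x := (t,0)) (y := (a,0)) Hfx); rewrite ?inE ?eqxx ?orbT //= Hf.
by pcomp.
Qed.

Lemma P3 a s u : a != s -> a != u -> s != u -> filter (inL [:: a; s; u]) V = [:: a; s; a; u] ->
  prec W (a,1) (u,0).
Proof.
move=> H1 H2 H3 Hf; symneq.
have Hfx : fixed [:: a; s; u].
  apply: (direct (K := [:: 0; 1; 2]) (pre := [::]) (fac := [:: 0; 1; 0; 2]) (suf := [:: 3; 2]) Hiso Hsat) => //.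
  by rewrite Hf; pcomp.
apply: (fixed_prec (x := (a,1)) (y := (u,0)) Hfx); rewrite ?inE ?eqxx ?orbT //= Hf.
by pcomp.
Qed.

Lemma P4 a s b u : a != s -> a != b -> a != u -> s != b -> s != u -> b != u ->
  filter (inL [:: a; s; b; u]) V = [:: a; s; a; b; u; b] -> prec W (a,1) (b,0).
Proof.
move=> H1 H2 H3 H4 H5 H6 Hf; symneq.
have Hfx : fixed [:: a; s; b; u].
  apply: (direct (K := [:: 0; 1; 2; 3]) (pre := [::]) (fac := w_xtxyty) (suf := [::]) Hiso Hsat) => //.
  by rewrite Hf; pcomp.
apply: (fixed_prec (x := (a,1)) (y := (b,0)) Hfx); rewrite ?inE ?eqxx ?orbT //= Hf.
by pcomp.
Qed.

Lemma Pc c t : c != t -> filter (inL [:: c; t]) V = [:: t] -> count_mem c W = count_mem c V.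
Proof.
move=> H1 Hf; symneq.
have Hfx : fixed [:: c; t].
  apply: (direct (K := [:: 0; 1]) (pre := [:: 0]) (fac := [:: 1]) (suf := [:: 0; 2; 3; 2]) Hiso Hsat) => //.
  by rewrite Hf; pcomp.
by apply: fixed_count Hfx _; rewrite inE eqxx.
Qed.

Lemma PI a s b u : a != s -> a != b -> a != u -> s != b -> s != u -> b != u ->
  filter (inL [:: a; s; b; u]) V = [:: a; s; b; a; u; b] ->
  filter (inL [:: a; s]) V = [:: a; s; a] -> filter (inL [:: b; u]) V = [:: b; u; b] ->
  perm_eq V W -> prec W (b,0) (a,1).
Proof.
move=> H1 H2 H3 H4 H5 H6 Hf Has Hbu Hp; symneq.
have [p1 p2 _ _] := P1 H1 Has.
have [q1 q2 _ _] := P1 H6 Hbu.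
have /andP[_ Ha1] := prec_mem p2.
have /andP[Hb0 _] := prec_mem q1.
have Hne : (b,0) != (a,1) by rewrite xpair_eqE; neqs.
case/orP: (prec_total Hb0 Ha1 Hne) => // H; exfalso.
pose L := [:: a; s; b; u].
have E : filter (inL L) W = [:: a; s; a; b; u; b].
  apply: (chainE (E := [:: (a,0); (s,0); (a,1); (b,0); (u,0); (b,1)])) => //.
    rewrite /= !prec_filter ?p1 ?p2 ?H ?q1 ?q2 //; by rewrite /inL /L /= !inE eqxx ?orbT.
  transitivity (size (filter (inL L) V)); first by apply/esym/perm_size/perm_filter.
  by rewrite /L Hf.
have := direct (K := [:: 0; 1; 2; 3]) (pre := [::]) (fac := w_xtxyty) (suf := [::]) (L := L) Hiso (sat_sym Hsat).
rewrite E Hf => /(_ isT erefl erefl isT).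
have -> : map (rn L [:: 0; 1; 2; 3]) [:: a; s; a; b; u; b] = w_xtxyty by rewrite /L; pcomp.
by move/(_ erefl) => [E'] ; move: H2; rewrite E' eqxx.
Qed.
End Pat.


Lemma sorted_flat (T : eqType) (R : rel T) (h : nat -> T) (t : nat -> seq T) (l : nat -> T) a k :
  (forall j, last (h j) (t j) = l j) -> (forall j, a <= j < a + k -> path R (h j) (t j)) ->
  (forall j, a < j < a + k -> R (l j.-1) (h j)) ->
  sorted R (flatten [seq h j :: t j | j <- iota a k]).
Proof.
elim: k a => [|k IH] a Hl Hp Hb //=.
rewrite cat_path Hp /=; last by lia.
rewrite Hl; case: k IH Hp Hb => [|k] IH Hp Hb //=.
rewrite (Hb a.+1) /=; last by lia.
have := IH a.+1 Hl; rewrite /=; apply.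
  by move=> j /andP[H1 H2]; apply: Hp; lia.
by move=> j /andP[H1 H2]; apply: Hb; lia.
Qed.

Lemma flat_last (T : eqType) (h : nat -> T) (t : nat -> seq T) (l : nat -> T) n z :
  (forall j, last (h j) (t j) = l j) -> 0 < n ->
  last z (flatten [seq h j :: t j | j <- iota 0 n]) = l n.-1.
Proof.
move=> Hl Hn; have -> : n = n.-1 + 1 by lia.
rewrite iotaD map_cat flatten_cat last_cat /= cats0 add0n.
by rewrite Hl addn1.
Qed.

Lemma sorted_cat2 (T : eqType) (R : rel T) s1 s2 z : sorted R s1 -> sorted R s2 ->
  (s1 != [::] -> s2 != [::] -> R (last z s1) (head z s2)) -> sorted R (s1 ++ s2).
Proof.
case: s1 => [|x s1] //= H1; case: s2 => [|y s2] //= H2 Hr; first by rewrite cats0.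
by rewrite cat_path H1 /= Hr.
Qed.

Lemma flat_head (T : eqType) (h : nat -> T) (t : nat -> seq T) n z s : 0 < n ->
  head z (flatten [seq h j :: t j | j <- iota 0 n] ++ s) = h 0.
Proof. by case: n. Qed.
Lemma flat_head0 (T : eqType) (h : nat -> T) (t : nat -> seq T) n z : 0 < n ->
  head z (flatten [seq h j :: t j | j <- iota 0 n]) = h 0.
Proof. by case: n. Qed.

Definition hA j := (zv j, 0). Definition tA j := [:: (tv j 0, 0); (pv j, 0); (tv j 1, 0)].
Definition lA j := (tv j 1, 0).
Definition hB j := (zv j, 1). Definition tB j := [:: (qv j, 0)]. Definition lB j := (qv j, 0).
Definition hC j := (pv j, 1). Definition tC j := [:: (rv j, 0)]. Definition lC j := (rv j, 0).
Definition hD j := (tv j 2, 0). Definition tD j := [:: (qv j, 1); (tv j 3, 0); (rv j, 1)].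
Definition lD j := (rv j, 1).

Definition EE n := flatten [seq hA j :: tA j | j <- iota 0 n] ++
  flatten [seq hB j :: tB j | j <- iota 0 n] ++ flatten [seq hC j :: tC j | j <- iota 0 n] ++
  flatten [seq hD j :: tD j | j <- iota 0 n].

Lemma EE_fst n : map fst (EE n) = big_word n.
Proof. by rewrite /EE !map_cat !map_flatten -!map_comp. Qed.

Ltac nq := rewrite ?zvE ?pvE ?qvE ?rvE ?tvE0 ?tvE1 ?tvE2 ?tvE3 ?lt8_eq //=; dec; try done.

Theorem lemma3p8 (S : monoid) (n : nat) :
  isoterm S w_xtxyty -> 1 <= n -> isoterm S (big_word n).
Proof.
move=> Hiso Hn; split; first by case: n Hn.
move=> W _ Hsat.
have A1 i : i < n -> [/\ prec W (zv i,0) (tv i 0,0), prec W (tv i 0,0) (zv i,1),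
    count_mem (zv i) W = count_mem (zv i) (big_word n) & count_mem (tv i 0) W = count_mem (tv i 0) (big_word n)].
  move=> Hi; have H : zv i != tv i 0 by nq.
  exact: (P1 Hiso Hsat H (fD1 Hi)).
have A3 i : i < n -> [/\ prec W (pv i,0) (tv i 1,0), prec W (tv i 1,0) (pv i,1),
    count_mem (pv i) W = count_mem (pv i) (big_word n) & count_mem (tv i 1) W = count_mem (tv i 1) (big_word n)].
  move=> Hi; have H : pv i != tv i 1 by nq.
  exact: (P1 Hiso Hsat H (fD3 Hi)).
have A7 i : i < n -> [/\ prec W (qv i,0) (tv i 2,0), prec W (tv i 2,0) (qv i,1),
    count_mem (qv i) W = count_mem (qv i) (big_word n) & count_mem (tv i 2) W = count_mem (tv i 2) (big_word n)].
  move=> Hi; have H : qv i != tv i 2 by nq.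
  exact: (P1 Hiso Hsat H (fD7 Hi)).
have A9 i : i < n -> [/\ prec W (rv i,0) (tv i 3,0), prec W (tv i 3,0) (rv i,1),
    count_mem (rv i) W = count_mem (rv i) (big_word n) & count_mem (tv i 3) W = count_mem (tv i 3) (big_word n)].
  move=> Hi; have H : rv i != tv i 3 by nq.
  exact: (P1 Hiso Hsat H (fD9 Hi)).
have Hcnt c : count_mem c W = count_mem c (big_word n).
  case: (ltnP c (8 * n)) => Hc; last first.
    by apply: (Pc Hiso Hsat _ (fDc Hn Hc)); rewrite tvE0 /lt8; apply/eqP; lia.
  have Hi : c %/ 8 < n by lia.
  have Ec : c = lt8 (c %/ 8) (c %% 8) by rewrite /lt8 mulnC -divn_eq.
  move: (c %% 8) (ltn_pmod c (isT : 0 < 8)) Ec => r Hr ->.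
  case: r Hr => [|[|[|[|[|[|[|[|r]]]]]]]] Hr //.
  - by rewrite -zvE; case: (A1 _ Hi).
  - by rewrite -pvE; case: (A3 _ Hi).
  - by rewrite -qvE; case: (A7 _ Hi).
  - by rewrite -rvE; case: (A9 _ Hi).
  - by rewrite -tvE0; case: (A1 _ Hi).
  - by rewrite -tvE1; case: (A3 _ Hi).
  - by rewrite -tvE2; case: (A7 _ Hi).
  - by rewrite -tvE3; case: (A9 _ Hi).
have Hperm : perm_eq (big_word n) W.
  by rewrite /perm_eq; apply/allP => x _ /=; rewrite Hcnt.
have pA2 i : i < n -> prec W (tv i 0,0) (pv i,0).
  by move=> Hi; apply: (P2 Hiso Hsat _ _ _ (fD2 Hi)); nq.
have pA4 i : i.+1 < n -> prec W (tv i 1,0) (zv i.+1,0).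
  by move=> Hi; apply: (P2 Hiso Hsat _ _ _ (fD4 Hi)); nq.
have pAB : prec W (tv n.-1 1,0) (zv 0,1).
  have H : zv 0 != tv n.-1 1 by nq.
  by case: (P1 Hiso Hsat H (fD5' Hn)).
have pB1 i : i < n -> prec W (zv i,1) (qv i,0).
  by move=> Hi; apply: (P4 Hiso Hsat _ _ _ _ _ _ (fD6 Hi)); nq.
have pB2 i : i.+1 < n -> prec W (qv i,0) (zv i.+1,1).
  move=> Hi; have Hi' : i < n by lia.
  by apply: (PI Hiso Hsat _ _ _ _ _ _ (fI1 Hi) (fD1 Hi) (fD7 Hi') Hperm); nq.
have pBC : prec W (qv n.-1,0) (pv 0,1).
  have Hn' : n.-1 < n by lia.
  by apply: (PI Hiso Hsat _ _ _ _ _ _ (fI2 Hn) (fD3 Hn) (fD7 Hn') Hperm); nq.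
have pC1 i : i < n -> prec W (pv i,1) (rv i,0).
  by move=> Hi; apply: (P4 Hiso Hsat _ _ _ _ _ _ (fD8 Hi)); nq.
have pC2 i : i.+1 < n -> prec W (rv i,0) (pv i.+1,1).
  move=> Hi; have Hi' : i < n by lia.
  by apply: (PI Hiso Hsat _ _ _ _ _ _ (fI3 Hi) (fD3 Hi) (fD9 Hi') Hperm); nq.
have pCD : prec W (rv n.-1,0) (tv 0 2,0).
  have H : rv n.-1 != tv 0 2 by nq.
  by case: (P1 Hiso Hsat H (fD10' Hn)).
have pD2 i : i < n -> prec W (qv i,1) (tv i 3,0).
  by move=> Hi; apply: (P3 Hiso Hsat _ _ _ (fD11 Hi)); nq.
have pD4 i : i.+1 < n -> prec W (rv i,1) (tv i.+1 2,0).
  by move=> Hi; apply: (P3 Hiso Hsat _ _ _ (fD12 Hi)); nq.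
apply: (chainE (E := EE n)).
- exact: EE_fst.
- rewrite /EE.
  apply: (sorted_cat2 (z := (0,0))).
    apply: (sorted_flat (l := lA)) => // j.
      move=> /andP[_ Hj] /=; case: (A1 _ Hj) => -> _ _ _; case: (A3 _ Hj) => -> _ _ _.
      by rewrite pA2.
    move=> /andP[H1 H2]; have -> : j = j.-1.+1 by lia.
    by apply: pA4; lia.
  apply: (sorted_cat2 (z := (0,0))).
    apply: (sorted_flat (l := lB)) => // j.
      by move=> /andP[_ Hj] /=; rewrite pB1.
    move=> /andP[H1 H2]; have -> : j = j.-1.+1 by lia.
    by apply: pB2; lia.
  apply: (sorted_cat2 (z := (0,0))).
    apply: (sorted_flat (l := lC)) => // j.
      by move=> /andP[_ Hj] /=; rewrite pC1.
    move=> /andP[H1 H2]; have -> : j = j.-1.+1 by lia.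
    by apply: pC2; lia.
    apply: (sorted_flat (l := lD)) => // j.
      move=> /andP[_ Hj] /=; case: (A7 _ Hj) => _ -> _ _; case: (A9 _ Hj) => _ -> _ _.
      by rewrite pD2.
    move=> /andP[H1 H2]; have -> : j = j.-1.+1 by lia.
    by apply: pD4; lia.
    by move=> _ _; rewrite (flat_last (l := lC)) // flat_head0 //; exact: pCD.
    by move=> _ _; rewrite (flat_last (l := lB)) // flat_head //; exact: pBC.
    by move=> _ _; rewrite (flat_last (l := lA)) // flat_head //; exact: pAB.
- by rewrite /EE; case: n Hn {A1 A3 A7 A9 Hcnt Hperm Hsat pA2 pA4 pAB pB1 pB2 pBC pC1 pC2 pCD pD2 pD4}.
- by rewrite (perm_size Hperm).
Qed.
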